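(* Let $n \ge 1$, $F = \{\mathrm{AND}, \mathrm{OR}\}$, $L = \{x_1, \ldots, x_n\}$ and $\ell \ge n$. The expected runtime $E[T]$ of RLS-GP (with HVL-Prime with subtree deletion as mutation operator, tree size limit $\ell$, and the complete truth table as fitness) on the target $\mathrm{AND}_n$, and likewise on the target $\mathrm{OR}_n$, is $\Omega(n \log n)$.
   Context: Programs are finite rooted binary trees (the empty tree is allowed) whose internal nodes are labelled by binary Boolean functions from $F$ and whose leaves are labelled by literals from $L$; a program computes a Boolean function of $(x_1,\dots,x_n)$ in the obvious way. $\mathrm{AND}_n(x) = x_1 \wedge \dots \wedge x_n$ and $\mathrm{OR}_n(x) = x_1 \vee \dots \vee x_n$. The fitness (to be minimised) of a program $X$ for target $h$ is $f(X) = |\{x \in \{0,1\}^n : X(x) \ne h(x)\}|$. LeafCount$(X)$ is the number of leaves of $X$. HVL-Prime with subtree deletion, applied to a tree $X$: choose $op \in \{\mathrm{INS}, \mathrm{DEL}, \mathrm{SUB}\}$, a literal $l \in L$ and a function $g \in F$, independently and uniformly at random. If $X$ is empty, the result is the tree consisting of the single leaf $l$. Otherwise: if $op = \mathrm{INS}$, choose a node $x$ of $X$ uniformly at random and replace it by a new node labelled $g$ whose two children are the subtree rooted at $x$ and a new leaf $l$, in uniformly random order; if $op = \mathrm{DEL}$, choose a node $x$ of $X$ (leaf or internal) uniformly at random and replace the parent of $x$ by the sibling of $x$ (removing the subtree rooted at $x$ together with its parent); if $op = \mathrm{SUB}$, choose a leaf of $X$ uniformly at random and replace it by $l$. RLS-GP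 with tree size limit $\ell$: start with the empty tree $X$; in each iteration $t = 1, 2, \ldots$ let $X' := $ HVL-Prime$(X)$, and if LeafCount$(X') \le \ell$ and $f(X') \le f(X)$ then set $X := X'$. The runtime $T$ is the number of iterations until the current tree computes exactly the target function (fitness $0$). Asymptotics are as $n \to \infty$. *)

(* Defs.v *)
From Stdlib Require Import Reals List Arith Bool.
Import ListNotations.
Open Scope R_scope.

Inductive fn : Type := FAND | FOR.

Definition fn_eval (g : fn) (a b : bool) : bool :=
  match g with FAND => a && b | FOR => a || b end.

(** Non-empty programs: leaves carry a literal index i (literal x_{i+1},
    i in 0..n-1), internal nodes carry a function from F. *)
Inductive tree : Type :=
| Leaf (i : nat)
| Node (g : fn) (l r : tree).

Definition prog := option tree.

(** Inputs x in {0,1}^n are boolean lists of length n; x_{i+1} = nth i x. *)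
Fixpoint eval_tree (x : list bool) (t : tree) : bool :=
  match t with
  | Leaf i => nth i x false
  | Node g a b => fn_eval g (eval_tree x a) (eval_tree x b)
  end.

Fixpoint all_inputs (n : nat) : list (list bool) :=
  match n with
  | O => [[]]
  | S m => map (cons false) (all_inputs m) ++ map (cons true) (all_inputs m)
  end.

Definition AND_n (x : list bool) : bool := forallb (fun b => b) x.
Definition OR_n (x : list bool) : bool := existsb (fun b => b) x.

(** Convention for the empty tree (it computes no function): it gets the
    worst value 2^n + 1, strictly worse than any non-empty tree. *)
Definition fitness (n : nat) (h : list bool -> bool) (X : prog) : nat :=
  match X with
  | None => S (2 ^ n)
  | Some t =>
      length (filter (fun x => negb (Bool.eqb (eval_tree x t) (h x)))
                     (all_inputs n))
  end.

Fixpoint size (t : tree) : nat :=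
  match t with Leaf _ => 1 | Node _ a b => S (size a + size b) end.

Fixpoint leaves (t : tree) : nat :=
  match t with Leaf _ => 1 | Node _ a b => leaves a + leaves b end.

Definition LeafCount (X : prog) : nat :=
  match X with None => 0 | Some t => leaves t end.

(** INS: for every node (preorder), the two results (both child orders);
    a list of length 2 * size t. *)
Fixpoint ins_results (g : fn) (l : nat) (t : tree) : list tree :=
  match t with
  | Leaf i => [Node g t (Leaf l); Node g (Leaf l) t]
  | Node h a b =>
      [Node g t (Leaf l); Node g (Leaf l) t]
      ++ map (fun a' => Node h a' b) (ins_results g l a)
      ++ map (fun b' => Node h a b') (ins_results g l b)
  end.

(** DEL at a non-root node: the parent of the node is replaced by its
    sibling; a list of length size t - 1. *)
Fixpoint del_sub (t : tree) : list tree :=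
  match t with
  | Leaf _ => []
  | Node h a b =>
      [b] ++ map (fun a' => Node h a' b) (del_sub a)
      ++ [a] ++ map (fun b' => Node h a b') (del_sub b)
  end.

(** DEL at every node; deleting the root (which has no parent) removes the
    whole tree, giving the empty program. Length size t. *)
Definition del_results (t : tree) : list prog :=
  None :: map Some (del_sub t).

Fixpoint sub_results (l : nat) (t : tree) : list tree :=
  match t with
  | Leaf _ => [Leaf l]
  | Node h a b =>
      map (fun a' => Node h a' b) (sub_results l a)
      ++ map (fun b' => Node h a b') (sub_results l b)
  end.

(** Distribution (finite list of (probability, outcome)) of HVL-Prime with
    subtree deletion applied to X, with L = {x_1..x_n}: op, literal and
    function uniform and independent, then uniform node / leaf / order. *)
Definition mut_dist (n : nat) (X : prog) : list (R * prog) :=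
  match X with
  | None => map (fun l => (/ INR n, Some (Leaf l))) (seq 0 n)
  | Some t =>
      flat_map (fun g =>
        flat_map (fun l =>
          let w := / 3 * / INR n * / 2 in
          map (fun y => (w / INR (2 * size t), Some y)) (ins_results g l t)
          ++ map (fun y => (w / INR (size t), y)) (del_results t)
          ++ map (fun y => (w / INR (leaves t), Some y)) (sub_results l t))
        (seq 0 n))
      [FAND; FOR]
  end.

(** One iteration of RLS-GP with tree size limit ell, applied to the
    sub-distribution of runs that have not yet reached fitness 0
    (runs that already reached fitness 0 are dropped: they have stopped). *)
Definition rls_step (n ell : nat) (h : list bool -> bool)
    (D : list (R * prog)) : list (R * prog) :=
  flat_map (fun pX : R * prog =>
    let (p, X) := pX in
    if Nat.eqb (fitness n h X) 0 then []
    else map (fun qY : R * prog =>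
           let (q, Y) := qY in
           (p * q,
            if Nat.leb (LeafCount Y) ell && Nat.leb (fitness n h Y) (fitness n h X)
            then Y else X))
         (mut_dist n X))
    D.

Fixpoint rls_dist (n ell : nat) (h : list bool -> bool) (t : nat)
  : list (R * prog) :=
  match t with
  | O => [(1, None)]
  | S t' => rls_step n ell h (rls_dist n ell h t')
  end.

(** P(T > t): probability that after t iterations the current tree does not
    yet compute the target. *)
Definition surv (n ell : nat) (h : list bool -> bool) (t : nat) : R :=
  fold_right Rplus 0
    (map (fun pX => if Nat.eqb (fitness n h (snd pX)) 0 then 0 else fst pX)
         (rls_dist n ell h t)).

(** Partial sums of E[T] = sum_{t >= 0} P(T > t) (tail-sum formula for an
    N u {oo}-valued T; valid also when E[T] = oo).  E[T] >= v holds iff the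
    supremum of these partial sums is >= v. *)
Definition ET_partial (n ell : nat) (h : list bool -> bool) (N : nat) : R :=
  fold_right Rplus 0 (map (surv n ell h) (seq 0 N)).

(* Main.v *)
Require Import Defs.
From Stdlib Require Import Reals List Arith Lia Lra Bool.
Import ListNotations.
Open Scope R_scope.

Definition sumf {A} (f : A -> R) (L : list A) : R := fold_right Rplus 0 (map f L).

Lemma sumf_nil {A} (f : A -> R) : sumf f [] = 0.
Proof. reflexivity. Qed.
Lemma sumf_cons {A} (f : A -> R) a L : sumf f (a :: L) = f a + sumf f L.
Proof. reflexivity. Qed.
Lemma sumf_app {A} (f : A -> R) L1 L2 : sumf f (L1 ++ L2) = sumf f L1 + sumf f L2.
Proof. induction L1; simpl; [unfold sumf; simpl; ring|]. rewrite !sumf_cons, IHL1. ring. Qed.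
Lemma sumf_map {A B} (f : B -> R) (g : A -> B) L : sumf f (map g L) = sumf (fun x => f (g x)) L.
Proof. unfold sumf. now rewrite map_map. Qed.
Lemma sumf_flat_map {A B} (f : B -> R) (g : A -> list B) L :
  sumf f (flat_map g L) = sumf (fun x => sumf f (g x)) L.
Proof. induction L; simpl; [reflexivity|]. rewrite sumf_app, sumf_cons, IHL. reflexivity. Qed.
Lemma sumf_le {A} (f g : A -> R) L : (forall x, In x L -> f x <= g x) -> sumf f L <= sumf g L.
Proof. induction L; intros H; [unfold sumf; simpl; lra|]. rewrite !sumf_cons.
  assert (f a <= g a) by (apply H; now left). assert (sumf f L <= sumf g L) by (apply IHL; intros; apply H; now right). lra. Qed.
Lemma sumf_ext {A} (f g : A -> R) L : (forall x, In x L -> f x = g x) -> sumf f L = sumf g L.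
Proof. induction L; intros H; [reflexivity|]. rewrite !sumf_cons.
  rewrite (H a) by now left. rewrite IHL by (intros; apply H; now right). reflexivity. Qed.
Lemma sumf_scal {A} (f : A -> R) c L : sumf (fun x => c * f x) L = c * sumf f L.
Proof. induction L; [unfold sumf; simpl; ring|]. rewrite !sumf_cons, IHL. ring. Qed.
Lemma sumf_minus {A} (f g : A -> R) L : sumf (fun x => f x - g x) L = sumf f L - sumf g L.
Proof. induction L; [unfold sumf; simpl; ring|]. rewrite !sumf_cons, IHL. ring. Qed.
Lemma sumf_const {A} c (L : list A) : sumf (fun _ => c) L = c * INR (length L).
Proof. induction L; [unfold sumf; simpl; ring|]. rewrite sumf_cons, IHL. simpl length. rewrite S_INR. ring. Qed.
Lemma sumf_if {A} (f : A -> bool) a b L :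
  sumf (fun x => if f x then a else b) L =
  INR (length (filter f L)) * a + INR (length (filter (fun x => negb (f x)) L)) * b.
Proof. induction L; [unfold sumf; simpl; ring|]. rewrite sumf_cons, IHL. cbn [filter].
  destruct (f a0); cbn [negb length]; rewrite ?S_INR; ring. Qed.

Fixpoint H (m : nat) : R := match m with O => 0 | S m' => H m' + / INR (S m') end.

Lemma H_ge0 m : 0 <= H m.
Proof. induction m; cbn [H]; [lra|]. assert (0 < / INR (S m)) by (apply Rinv_0_lt_compat, lt_0_INR; lia). lra. Qed.
Lemma H_mono m1 m2 : (m1 <= m2)%nat -> H m1 <= H m2.
Proof. induction 1; [lra|]. cbn [H]. assert (0 < / INR (S m)) by (apply Rinv_0_lt_compat, lt_0_INR; lia). lra. Qed.
Lemma H_le m : H m <= INR m.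
Proof. induction m; [simpl; lra|]. change (H (S m)) with (H m + / INR (S m)).
  assert (/ INR (S m) <= 1). { rewrite <- Rinv_1. apply Rinv_le_contravar; [lra|]. rewrite S_INR. pose proof (pos_INR m). lra. }
  rewrite S_INR in *. lra. Qed.
Lemma ln1p x : -1 < x -> ln (1 + x) <= x.
Proof. intros Hx. pose proof (exp_ineq1_le x). destruct H0 as [Hl|He].
  - left. rewrite <- (ln_exp x) at 2. apply ln_increasing; lra.
  - rewrite He, ln_exp. lra. Qed.
Lemma H_ln m : ln (INR m + 1) <= H m.
Proof. induction m; cbn [H].
  - simpl. replace (0+1) with 1 by ring. rewrite ln_1. lra.
  - rewrite S_INR. pose proof (pos_INR m).
    replace (INR m + 1 + 1) with ((INR m + 1) * (1 + / (INR m + 1))) by (field; lra).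
    rewrite ln_mult by (try lra; assert (0 < / (INR m + 1)) by (apply Rinv_0_lt_compat; lra); lra).
    assert (ln (1 + / (INR m + 1)) <= / (INR m + 1)).
    { apply ln1p. assert (0 < / (INR m + 1)) by (apply Rinv_0_lt_compat; lra); lra. }
    rewrite <- S_INR in *. lra. Qed.
Lemma H_ln' m : (1 <= m)%nat -> ln (INR m) <= H m.
Proof. intros. pose proof (H_ln m). assert (ln (INR m) <= ln (INR m + 1)).
  { left. apply ln_increasing; [apply lt_0_INR; lia| lra]. } lra. Qed.

Fixpoint occurs (i : nat) (t : tree) : bool :=
  match t with Leaf j => Nat.eqb i j | Node _ a b => occurs i a || occurs i b end.

Definition kk (n : nat) (X : prog) : nat :=
  match X with None => O | Some t => length (filter (fun i => occurs i t) (seq 0 n)) end.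

Definition phi (n k : nat) : R := INR n * H (n - k).
Definition vphi (n : nat) (X : prog) : R := phi n (kk n X).

Lemma kk_le n X : (kk n X <= n)%nat.
Proof. destruct X; simpl; [|lia]. rewrite <- (length_seq n 0) at 2. apply filter_length_le. Qed.

Lemma phi_anti n k1 k2 : (k1 <= k2)%nat -> phi n k2 <= phi n k1.
Proof. intros. unfold phi. apply Rmult_le_compat_l; [apply pos_INR|]. apply H_mono. lia. Qed.

Lemma phi_step n k : (k < n)%nat -> phi n k = phi n (S k) + INR n / INR (n - k).
Proof. intros. unfold phi. replace (n - k)%nat with (S (n - S k)) by lia. cbn [H].
  replace (S (n - S k)) with (n - k)%nat by lia. unfold Rdiv. ring. Qed.

Lemma phi_n n : phi n n = 0.
Proof. unfold phi. rewrite Nat.sub_diag. simpl. ring. Qed.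

Lemma phi_le0 n k : phi n k <= phi n 0.
Proof. apply phi_anti. lia. Qed.
Lemma phi_ge0 n k : 0 <= phi n k.
Proof. unfold phi. apply Rmult_le_pos; [apply pos_INR|apply H_ge0]. Qed.

Lemma size_pos t : (1 <= size t)%nat.
Proof. destruct t; simpl; lia. Qed.
Lemma leaves_pos t : (1 <= leaves t)%nat.
Proof. induction t; simpl; lia. Qed.
Lemma ins_len g l t : length (ins_results g l t) = (2 * size t)%nat.
Proof. induction t; simpl; [reflexivity|]. rewrite !length_app, !length_map, IHt1, IHt2. simpl. lia. Qed.
Lemma del_len t : (length (del_sub t) + 1)%nat = size t.
Proof. induction t; simpl; [reflexivity|]. rewrite !length_app, !length_map. simpl. rewrite ?length_map. lia. Qed.
Lemma del_results_len t : length (del_results t) = size t.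
Proof. unfold del_results. simpl. rewrite length_map. pose proof (del_len t). lia. Qed.
Lemma sub_len l t : length (sub_results l t) = leaves t.
Proof. induction t; simpl; [reflexivity|]. rewrite !length_app, !length_map. lia. Qed.

Lemma ins_occ g l t y : In y (ins_results g l t) -> forall j, occurs j y = true -> occurs j t = true \/ j = l.
Proof.
  assert (Hbase : forall t j, (occurs j t || (j =? l)) = true \/ ((j =? l) || occurs j t) = true -> occurs j t = true \/ j = l).
  { intros t0 j [Hj|Hj]; apply orb_true_iff in Hj; destruct Hj as [Hj|Hj]; try (apply Nat.eqb_eq in Hj); tauto. }
  revert y. induction t; intros y Hy j Hj.
  - apply Hbase. simpl in Hy. destruct Hy as [<-|[<-|[]]]; [left|right]; exact Hj.
  - cbn [ins_results] in Hy. rewrite !in_app_iff, !in_map_iff in Hy.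
    destruct Hy as [Hy|[[a' [<- Ha]]|[b' [<- Hb]]]].
    + apply Hbase. destruct Hy as [<-|[<-|[]]]; [left|right]; exact Hj.
    + simpl in Hj |- *. rewrite orb_true_iff in Hj |- *. destruct Hj as [Hj|Hj]; [|tauto].
      destruct (IHt1 _ Ha j Hj); tauto.
    + simpl in Hj |- *. rewrite orb_true_iff in Hj |- *. destruct Hj as [Hj|Hj]; [tauto|].
      destruct (IHt2 _ Hb j Hj); tauto.
Qed.

Lemma sub_occ l t y : In y (sub_results l t) -> forall j, occurs j y = true -> occurs j t = true \/ j = l.
Proof.
  revert y; induction t; simpl; intros y Hy j Hj.
  - destruct Hy as [<-|[]]; simpl in Hj. rewrite Nat.eqb_eq in Hj. tauto.
  - rewrite !in_app_iff, !in_map_iff in Hy.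
    destruct Hy as [[a' [<- Ha]]|[b' [<- Hb]]].
    + simpl in Hj. rewrite orb_true_iff in Hj |- *. destruct Hj as [Hj|Hj]; [|tauto].
      destruct (IHt1 _ Ha j Hj); tauto.
    + simpl in Hj. rewrite orb_true_iff in Hj |- *. destruct Hj as [Hj|Hj]; [tauto|].
      destruct (IHt2 _ Hb j Hj); tauto.
Qed.

Lemma del_occ t y : In y (del_sub t) -> forall j, occurs j y = true -> occurs j t = true.
Proof.
  revert y; induction t; cbn [del_sub]; intros y Hy j Hj; [destruct Hy|].
  rewrite !in_app_iff, !in_map_iff in Hy.
  destruct Hy as [[<-|[]]|[[a' [<- Ha]]|[[<-|[]]|[b' [<- Hb]]]]]; simpl in Hj |- *;
    rewrite ?orb_true_iff in Hj; rewrite ?orb_true_iff.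
  - tauto.
  - destruct Hj as [Hj|Hj]; [left; apply (IHt1 _ Ha j Hj)|tauto].
  - tauto.
  - destruct Hj as [Hj|Hj]; [tauto|right; apply (IHt2 _ Hb j Hj)].
Qed.

Lemma filter_nil' {A} (f : A -> bool) L : (forall x, In x L -> f x = false) -> filter f L = [].
Proof. induction L; intros Hf; simpl; [reflexivity|]. rewrite Hf by now left. apply IHL. intros; apply Hf; now right. Qed.

Lemma filter_count_le {A} (f g : A -> bool) (h : A -> bool) L :
  (forall x, f x = true -> g x = true \/ h x = true) ->
  (length (filter f L) <= length (filter g L) + length (filter (fun x => h x && negb (g x)) L))%nat.
Proof. intros Hf. induction L; simpl; [lia|].
  destruct (f a) eqn:E1, (g a) eqn:E2, (h a) eqn:E3; simpl; try lia.
  destruct (Hf a E1); congruence. Qed.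

Lemma nodup_single (L : list nat) l : NoDup L -> (forall x, In x L -> x = l) -> (length L <= 1)%nat.
Proof. intros ND Hx. destruct L as [|a [|b L]]; simpl; try lia.
  inversion ND; subst. exfalso. apply H2. rewrite (Hx a), (Hx b) by (simpl; tauto). now left. Qed.

Lemma filter_eq_le1 n (p : nat -> bool) l : (forall x, p x = true -> x = l) ->
  (length (filter p (seq 0 n)) <= 1)%nat.
Proof. intros Hp. apply (nodup_single _ l). apply NoDup_filter, seq_NoDup.
  intros x Hx. apply filter_In in Hx. apply Hp; tauto. Qed.

Lemma kk_sub n t y l : (forall i, occurs i y = true -> occurs i t = true \/ i = l) ->
  (kk n (Some y) <= kk n (Some t) + (if occurs l t then 0 else 1))%nat.
Proof. intros Hi. simpl.
  eapply Nat.le_trans. apply (filter_count_le (fun i => occurs i y) (fun i => occurs i t) (fun i => Nat.eqb i l)).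
  { intros x Hx. destruct (Hi x Hx); [now left|right; now apply Nat.eqb_eq]. }
  apply Nat.add_le_mono_l. destruct (occurs l t) eqn:E.
  - rewrite filter_nil'; [simpl; lia|].
    intros x _ . destruct (Nat.eqb_spec x l); subst; simpl; [rewrite E; reflexivity|reflexivity].
  - apply (filter_eq_le1 n _ l). intros x Hx. apply andb_true_iff in Hx. now apply Nat.eqb_eq.
Qed.

Lemma sumf_mc_ge {A} (c b : R) (G : A -> prog) (F : prog -> R) L :
  0 <= c -> (forall y, In y L -> b <= F (G y)) ->
  c * INR (length L) * b <= sumf (fun e : R * prog => fst e * F (snd e)) (map (fun y => (c, G y)) L).
Proof. intros Hc Hb. rewrite sumf_map. simpl.
  eapply Rle_trans; [|apply (sumf_le (fun _ => c * b))].
  - rewrite sumf_const. lra.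
  - intros y Hy. apply Rmult_le_compat_l; auto. Qed.

Lemma sumf_mc_eq {A} (c : R) (G : A -> prog) L :
  sumf (fun e : R * prog => fst e) (map (fun y => (c, G y)) L) = c * INR (length L).
Proof. rewrite sumf_map. simpl. apply sumf_const. Qed.

Lemma INR_pos k : (1 <= k)%nat -> 0 < INR k.
Proof. intros; apply lt_0_INR; lia. Qed.

Lemma mut_nonneg n X e : (1 <= n)%nat -> In e (mut_dist n X) -> 0 <= fst e.
Proof. intros Hn He. pose proof (INR_pos n Hn). destruct X as [t|]; unfold mut_dist in He.
  - pose proof (INR_pos _ (size_pos t)). pose proof (INR_pos _ (leaves_pos t)).
    assert (0 < INR (2 * size t)) by (apply INR_pos; pose proof (size_pos t); lia).
    assert (0 < / 3 * / INR n * / 2) by (repeat apply Rmult_lt_0_compat; apply Rinv_0_lt_compat; lra).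
    apply in_flat_map in He. destruct He as [g [_ He]].
    apply in_flat_map in He. destruct He as [l [_ He]].
    rewrite !in_app_iff, !in_map_iff in He.
    destruct He as [[y [<- _]]|[[y [<- _]]|[y [<- _]]]]; simpl; unfold Rdiv;
      left; apply Rmult_lt_0_compat; auto; apply Rinv_0_lt_compat; auto.
  - apply in_map_iff in He. destruct He as [l [<- _]]. simpl. left. now apply Rinv_0_lt_compat.
Qed.

Lemma inner_sum_eq t g l (G : R * prog -> R) (w : R) :
  sumf G (map (fun y => (w / INR (2 * size t), Some y)) (ins_results g l t)
          ++ map (fun y => (w / INR (size t), y)) (del_results t)
          ++ map (fun y => (w / INR (leaves t), Some y)) (sub_results l t))
  = sumf G (map (fun y => (w / INR (2 * size t), Some y)) (ins_results g l t))
    + sumf G (map (fun y => (w / INR (size t), y)) (del_results t))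
    + sumf G (map (fun y => (w / INR (leaves t), Some y)) (sub_results l t)).
Proof. rewrite !sumf_app. ring. Qed.

Lemma three_w t w : w / INR (2 * size t) * INR (2 * size t) + w / INR (size t) * INR (size t)
   + w / INR (leaves t) * INR (leaves t) = 3 * w.
Proof. pose proof (INR_pos _ (size_pos t)). pose proof (INR_pos _ (leaves_pos t)).
  assert (0 < INR (2 * size t)) by (apply INR_pos; pose proof (size_pos t); lia).
  field. lra. Qed.

Lemma mut_mass n X : (1 <= n)%nat -> sumf fst (mut_dist n X) = 1.
Proof. intros Hn. pose proof (INR_pos n Hn). destruct X as [t|]; unfold mut_dist.
  - rewrite sumf_flat_map, !sumf_cons, sumf_nil.
    rewrite !sumf_flat_map.
    assert (Hin : forall g, sumf (fun l => sumf fst (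
          map (fun y => (/ 3 * / INR n * / 2 / INR (2 * size t), Some y)) (ins_results g l t)
          ++ map (fun y => (/ 3 * / INR n * / 2 / INR (size t), y)) (del_results t)
          ++ map (fun y => (/ 3 * / INR n * / 2 / INR (leaves t), Some y)) (sub_results l t))) (seq 0 n) = / 2).
    { intros g. rewrite (sumf_ext _ (fun _ => / (2 * INR n)) (seq 0 n)).
      2:{ intros l _. cbv zeta. rewrite inner_sum_eq, !sumf_mc_eq.
        rewrite ins_len, del_results_len, sub_len, three_w. field. lra. }
      rewrite sumf_const, length_seq. field. lra. }
    rewrite !Hin. field.
  - rewrite sumf_mc_eq, length_seq. field. lra.
Qed.

Lemma drift n X (F : prog -> R) : (1 <= n)%nat ->
  (forall Y, (kk n Y <= kk n X)%nat -> phi n (kk n X) <= F Y) ->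
  (forall Y, (kk n Y <= S (kk n X))%nat -> phi n (S (kk n X)) <= F Y) ->
  phi n (kk n X) - 1 <= sumf (fun e : R * prog => fst e * F (snd e)) (mut_dist n X).
Proof.
  intros Hn HF1 HF2. pose proof (INR_pos n Hn) as Hnpos.
  destruct X as [t|].
  - pose proof (kk_le n (Some t)) as Hkn.
    set (k := kk n (Some t)) in *.
    set (b := fun l => if occurs l t then phi n k else phi n (S k)).
    assert (Hb : forall l Y, (kk n Y <= k + (if occurs l t then 0 else 1))%nat -> b l <= F Y).
    { intros l Y HY. unfold b. destruct (occurs l t).
      - apply HF1. lia.
      - apply HF2. lia. }
    unfold mut_dist. rewrite sumf_flat_map, !sumf_cons, sumf_nil, !sumf_flat_map.
    assert (Hin : forall g, / (2 * INR n) * sumf b (seq 0 n) <= sumf (fun l => sumf (fun e : R * prog => fst e * F (snd e)) (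
          map (fun y => (/ 3 * / INR n * / 2 / INR (2 * size t), Some y)) (ins_results g l t)
          ++ map (fun y => (/ 3 * / INR n * / 2 / INR (size t), y)) (del_results t)
          ++ map (fun y => (/ 3 * / INR n * / 2 / INR (leaves t), Some y)) (sub_results l t))) (seq 0 n)).
    { intros g. rewrite <- sumf_scal. apply sumf_le. intros l _. rewrite inner_sum_eq.
      pose proof (INR_pos _ (size_pos t)) as Hs. pose proof (INR_pos _ (leaves_pos t)) as Hlv.
      assert (H2s : 0 < INR (2 * size t)) by (apply INR_pos; pose proof (size_pos t); lia).
      assert (0 < / 3 * / INR n * / 2) by (repeat apply Rmult_lt_0_compat; apply Rinv_0_lt_compat; lra).
      assert (Hw : forall d, 0 < d -> 0 <= / 3 * / INR n * / 2 / d).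
      { intros d Hd. left. unfold Rdiv. apply Rmult_lt_0_compat; auto. apply Rinv_0_lt_compat; auto. }
      pose proof (sumf_mc_ge (/ 3 * / INR n * / 2 / INR (2 * size t)) (b l) Some F (ins_results g l t) (Hw _ H2s)) as E1.
      pose proof (sumf_mc_ge (/ 3 * / INR n * / 2 / INR (size t)) (b l) (fun y => y) F (del_results t) (Hw _ Hs)) as E2.
      pose proof (sumf_mc_ge (/ 3 * / INR n * / 2 / INR (leaves t)) (b l) Some F (sub_results l t) (Hw _ Hlv)) as E3.
      rewrite ins_len in E1. rewrite del_results_len in E2. rewrite sub_len in E3.
      assert (Eq : / (2 * INR n) * b l =
         / 3 * / INR n * / 2 / INR (2 * size t) * INR (2 * size t) * b l
         + / 3 * / INR n * / 2 / INR (size t) * INR (size t) * b l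
         + / 3 * / INR n * / 2 / INR (leaves t) * INR (leaves t) * b l).
      { transitivity ((/ 3 * / INR n * / 2 / INR (2 * size t) * INR (2 * size t)
         + / 3 * / INR n * / 2 / INR (size t) * INR (size t)
         + / 3 * / INR n * / 2 / INR (leaves t) * INR (leaves t)) * b l); [|ring].
        rewrite three_w. field. lra. }
      rewrite Eq.
      assert (S1 := E1 (fun y Hy => Hb l (Some y) (kk_sub n t y l (ins_occ g l t y Hy)))).
      assert (S3 := E3 (fun y Hy => Hb l (Some y) (kk_sub n t y l (sub_occ l t y Hy)))).
      assert (S2 : / 3 * / INR n * / 2 / INR (size t) * INR (size t) * b l <=
         sumf (fun e : R * prog => fst e * F (snd e)) (map (fun y => (/ 3 * / INR n * / 2 / INR (size t), y)) (del_results t))).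
      { apply E2. intros y Hy. unfold del_results in Hy. destruct Hy as [<-|Hy].
        - apply Hb. simpl. lia.
        - apply in_map_iff in Hy. destruct Hy as [y' [<- Hy']]. apply Hb.
          apply kk_sub. intros j Hj. left. exact (del_occ t y' Hy' j Hj). }
      cbv beta in *. apply Rplus_le_compat; [apply Rplus_le_compat|]; assumption. }
    pose proof (Hin FAND) as HA. pose proof (Hin FOR) as HO.
    assert (Hsb : sumf b (seq 0 n) = INR k * phi n k + (INR n - INR k) * phi n (S k)).
    { unfold b. rewrite sumf_if. pose proof (filter_length (fun i => occurs i t) (seq 0 n)) as FL.
      rewrite length_seq in FL. change (length (filter (fun i => occurs i t) (seq 0 n))) with k in *.
      replace (length (filter (fun x => negb (occurs x t)) (seq 0 n))) with (n - k)%nat by lia.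
      rewrite minus_INR by lia. reflexivity. }
    rewrite Hsb in HA, HO.
    assert (Key : phi n k - 1 <= 2 * (/ (2 * INR n) * (INR k * phi n k + (INR n - INR k) * phi n (S k)))).
    { destruct (Nat.eq_dec k n) as [Ek|Nk].
      - rewrite Ek. replace (2 * (/ (2 * INR n) * (INR n * phi n n + (INR n - INR n) * phi n (S n))))
          with (phi n n) by (field; lra). lra.
      - rewrite (phi_step n k) by lia. rewrite minus_INR by lia.
        assert (INR k < INR n) by (apply lt_INR; lia).
        right. field. lra. }
    lra.
  - unfold mut_dist. simpl kk in *.
    assert (HS : forall l, phi n 1 <= F (Some (Leaf l))).
    { intros l. apply HF2. simpl. apply (filter_eq_le1 n _ l). intros x Hx. now apply Nat.eqb_eq. }
    pose proof (sumf_mc_ge (/ INR n) (phi n 1) (fun l => Some (Leaf l)) F (seq 0 n)) as E.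
    rewrite length_seq in E.
    assert (H0 : 0 <= / INR n) by (left; apply Rinv_0_lt_compat; lra).
    specialize (E H0 (fun l _ => HS l)).
    rewrite (phi_step n 0) by lia. rewrite Nat.sub_0_r.
    replace (/ INR n * INR n * phi n 1) with (phi n 1) in E by (field; lra).
    replace (phi n 1 + INR n / INR n - 1) with (phi n 1) by (field; lra). exact E.
Qed.

Lemma eval_indep i t x1 x2 : occurs i t = false ->
  (forall j, j <> i -> nth j x1 false = nth j x2 false) -> eval_tree x1 t = eval_tree x2 t.
Proof. intros Ho Hx. induction t; simpl in *.
  - apply Hx. intros ->. now rewrite Nat.eqb_refl in Ho.
  - apply orb_false_iff in Ho. destruct Ho. now rewrite IHt1, IHt2. Qed.

Lemma all_inputs_complete n x : length x = n -> In x (all_inputs n).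
Proof. revert x; induction n; intros x Hx.
  - destruct x; [now left|discriminate].
  - destruct x as [|b x]; [discriminate|]. simpl in Hx. simpl. apply in_app_iff.
    destruct b; [right|left]; apply in_map; apply IHn; lia. Qed.

Lemma filter_id {A} (f : A -> bool) L : (forall x, In x L -> f x = true) -> filter f L = L.
Proof. induction L; intros Hf; simpl; [reflexivity|]. rewrite Hf by now left. f_equal. apply IHL. intros; apply Hf; now right. Qed.

Lemma fit0_eval n h t : fitness n h (Some t) = 0%nat -> forall x, length x = n -> eval_tree x t = h x.
Proof. intros Hf x Hx. simpl in Hf. apply length_zero_iff_nil in Hf.
  destruct (eval_tree x t) eqn:E1, (h x) eqn:E2; auto; exfalso;
  assert (In x (filter (fun x0 => negb (Bool.eqb (eval_tree x0 t) (h x0))) (all_inputs n)))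
    by (apply filter_In; split; [now apply all_inputs_complete| rewrite E1, E2; reflexivity]);
  rewrite Hf in H0; destruct H0. Qed.

Definition sep (n : nat) (h : list bool -> bool) : Prop :=
  forall i, (i < n)%nat -> exists x1 x2, length x1 = n /\ length x2 = n /\
    (forall j, j <> i -> nth j x1 false = nth j x2 false) /\ h x1 <> h x2.

Lemma fit0_kk n h X : sep n h -> fitness n h X = 0%nat -> kk n X = n.
Proof. intros Hs Hf. destruct X as [t|]; [|discriminate]. simpl.
  rewrite filter_id; [apply length_seq|]. intros i Hi. apply in_seq in Hi.
  destruct (occurs i t) eqn:Eo; [reflexivity|exfalso].
  destruct (Hs i ltac:(lia)) as [x1 [x2 [L1 [L2 [Hx Hne]]]]].
  apply Hne. rewrite <- (fit0_eval n h t Hf x1 L1), <- (fit0_eval n h t Hf x2 L2).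
  now apply (eval_indep i). Qed.

Lemma nth_map_seq (f : nat -> bool) n j : nth j (map f (seq 0 n)) false = if Nat.ltb j n then f j else false.
Proof. destruct (Nat.ltb_spec j n).
  - rewrite nth_indep with (d' := f 0%nat) by (rewrite length_map, length_seq; lia).
    rewrite map_nth, seq_nth by lia. reflexivity.
  - apply nth_overflow. rewrite length_map, length_seq. lia. Qed.

Lemma sep_gen n h (f1 f2 : nat -> nat -> bool) :
  (forall i j, j <> i -> f1 i j = f2 i j) ->
  (forall i, (i < n)%nat -> h (map (f1 i) (seq 0 n)) <> h (map (f2 i) (seq 0 n))) -> sep n h.
Proof. intros Hf Hh i Hi. exists (map (f1 i) (seq 0 n)), (map (f2 i) (seq 0 n)).
  rewrite !length_map, !length_seq. repeat split; auto.
  intros j Hj. rewrite !nth_map_seq. destruct (Nat.ltb j n); auto. Qed.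

Lemma sep_AND n : sep n AND_n.
Proof. apply (sep_gen n AND_n (fun _ _ => true) (fun i j => negb (Nat.eqb j i))).
  - intros i j Hj. apply Nat.eqb_neq in Hj. now rewrite Hj.
  - intros i Hi. unfold AND_n.
    assert (A1 : forallb (fun b => b) (map (fun _ => true) (seq 0 n)) = true).
    { apply forallb_forall. intros x Hx. apply in_map_iff in Hx. destruct Hx as [? [<- _]]. reflexivity. }
    rewrite A1. intros A2. symmetry in A2. rewrite forallb_forall in A2.
    assert (Hin : In (nth i (map (fun j => negb (j =? i)) (seq 0 n)) false) (map (fun j => negb (j =? i)) (seq 0 n)))
      by (apply nth_In; rewrite length_map, length_seq; lia).
    apply A2 in Hin. rewrite nth_map_seq in Hin. apply Nat.ltb_lt in Hi. rewrite Hi, Nat.eqb_refl in Hin. discriminate.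
Qed.

Lemma sep_OR n : sep n OR_n.
Proof. apply (sep_gen n OR_n (fun _ _ => false) (fun i j => Nat.eqb j i)).
  - intros i j Hj. apply Nat.eqb_neq in Hj. now rewrite Hj.
  - intros i Hi. unfold OR_n.
    assert (A1 : existsb (fun b => b) (map (fun _ => false) (seq 0 n)) = false).
    { apply not_true_iff_false. rewrite existsb_exists. intros [x [Hx Hx']]. apply in_map_iff in Hx. destruct Hx as [? [<- _]]. discriminate. }
    rewrite A1. intros A2. symmetry in A2. apply not_true_iff_false in A2. apply A2. apply existsb_exists.
    exists (nth i (map (fun j => j =? i) (seq 0 n)) false). split.
    + apply nth_In; rewrite length_map, length_seq; lia.
    + rewrite nth_map_seq. apply Nat.ltb_lt in Hi. now rewrite Hi, Nat.eqb_refl.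
Qed.

Definition Alive n h (D : list (R * prog)) : R :=
  sumf (fun pX : R * prog => if Nat.eqb (fitness n h (snd pX)) 0 then 0 else fst pX) D.
Definition PhiD n (D : list (R * prog)) : R := sumf (fun pX : R * prog => fst pX * vphi n (snd pX)) D.
Definition NN (D : list (R * prog)) : Prop := forall e, In e D -> 0 <= fst e.

Lemma surv_Alive n ell h t : surv n ell h t = Alive n h (rls_dist n ell h t).
Proof. reflexivity. Qed.

Lemma step_NN n ell h D : (1 <= n)%nat -> NN D -> NN (rls_step n ell h D).
Proof. intros Hn HD e He. unfold rls_step in He. apply in_flat_map in He. destruct He as [[p X] [HpX He]].
  destruct (Nat.eqb (fitness n h X) 0); [destruct He|].
  apply in_map_iff in He. destruct He as [[q Y] [<- Hq]]. simpl.
  apply Rmult_le_pos; [apply (HD _ HpX)|apply (mut_nonneg n X (q, Y) Hn Hq)]. Qed.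

Lemma step_mass n ell h D : (1 <= n)%nat -> sumf fst (rls_step n ell h D) = Alive n h D.
Proof. intros Hn. unfold rls_step, Alive. rewrite sumf_flat_map. apply sumf_ext. intros [p X] _. simpl snd; simpl fst.
  destruct (Nat.eqb (fitness n h X) 0); [reflexivity|].
  rewrite sumf_map. rewrite (sumf_ext _ (fun qY : R * prog => p * fst qY)).
  - rewrite sumf_scal, mut_mass by exact Hn. ring.
  - intros [q Y] _. reflexivity. Qed.

Lemma Alive_le_mass n h D : NN D -> Alive n h D <= sumf fst D.
Proof. intros HD. unfold Alive. apply sumf_le. intros [p X] HpX. simpl.
  destruct (Nat.eqb (fitness n h X) 0); [apply (HD _ HpX)|lra]. Qed.

Lemma PhiD_le n h D : sep n h -> NN D -> PhiD n D <= phi n 0 * Alive n h D.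
Proof. intros Hs HD. unfold PhiD, Alive. rewrite <- sumf_scal. apply sumf_le. intros [p X] HpX. simpl.
  pose proof (HD _ HpX) as Hp. simpl in Hp.
  destruct (Nat.eqb_spec (fitness n h X) 0) as [E|E].
  - unfold vphi. rewrite (fit0_kk n h X Hs E), phi_n. lra.
  - unfold vphi. pose proof (phi_le0 n (kk n X)). rewrite (Rmult_comm (phi n 0)).
    apply Rmult_le_compat_l; auto. Qed.

Lemma step_phi n ell h D : (1 <= n)%nat -> sep n h -> NN D ->
  PhiD n D - Alive n h D <= PhiD n (rls_step n ell h D).
Proof. intros Hn Hs HD. unfold PhiD, Alive, rls_step. rewrite <- sumf_minus, sumf_flat_map.
  apply sumf_le. intros [p X] HpX. pose proof (HD _ HpX) as Hp. simpl in Hp |- *.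
  destruct (Nat.eqb_spec (fitness n h X) 0) as [E|E].
  - unfold vphi. rewrite (fit0_kk n h X Hs E), phi_n. unfold sumf; simpl. lra.
  - rewrite sumf_map.
    set (ch := fun Y => if Nat.leb (LeafCount Y) ell && Nat.leb (fitness n h Y) (fitness n h X) then Y else X).
    rewrite (sumf_ext _ (fun qY : R * prog => p * (fst qY * vphi n (ch (snd qY))))).
    2:{ intros [q Y] _. simpl. unfold ch. ring. }
    rewrite sumf_scal.
    assert (Hd := drift n X (fun Y => vphi n (ch Y)) Hn).
    assert (phi n (kk n X) - 1 <= sumf (fun e : R * prog => fst e * vphi n (ch (snd e))) (mut_dist n X)).
    { apply Hd.
      - intros Y HY. unfold vphi, ch. destruct (_ && _); apply phi_anti; lia.
      - intros Y HY. unfold vphi, ch. destruct (_ && _); apply phi_anti; lia. }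
    unfold vphi at 1. 
    replace (p * phi n (kk n X) - p) with (p * (phi n (kk n X) - 1)) by ring.
    apply Rmult_le_compat_l; auto.
Qed.

Lemma ET_S n ell h N : ET_partial n ell h (S N) = ET_partial n ell h N + surv n ell h N.
Proof. change (ET_partial n ell h (S N)) with (sumf (surv n ell h) (seq 0 (S N))).
  change (ET_partial n ell h N) with (sumf (surv n ell h) (seq 0 N)).
  rewrite seq_S, sumf_app, sumf_cons, sumf_nil. simpl. ring. Qed.

Lemma main_ind n ell h : (1 <= n)%nat -> sep n h -> forall N,
  NN (rls_dist n ell h N) /\ phi n 0 - ET_partial n ell h N <= PhiD n (rls_dist n ell h N)
  /\ INR N * surv n ell h N <= ET_partial n ell h N.
Proof. intros Hn Hs. induction N as [|N [IH1 [IH2 IH3]]].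
  - simpl. split; [|split].
    + intros e [<-|[]]. simpl. lra.
    + unfold PhiD, vphi. rewrite sumf_cons, sumf_nil. simpl kk. unfold ET_partial. simpl. lra.
    + unfold ET_partial. simpl. lra.
  - assert (NS : NN (rls_dist n ell h (S N))) by (simpl; now apply step_NN).
    assert (Hmono : surv n ell h (S N) <= surv n ell h N).
    { rewrite !surv_Alive. simpl rls_dist at 1. eapply Rle_trans; [apply Alive_le_mass, NS|].
      simpl rls_dist. rewrite step_mass by exact Hn. lra. }
    split; [exact NS|split].
    + rewrite ET_S. simpl rls_dist. pose proof (step_phi n ell h _ Hn Hs IH1).
      rewrite surv_Alive. lra.
    + rewrite ET_S, S_INR. pose proof (pos_INR N).
      assert (INR N * surv n ell h (S N) <= INR N * surv n ell h N) by (apply Rmult_le_compat_l; lra).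
      lra.
Qed.

Lemma bound n ell h : (1 <= n)%nat -> sep n h ->
  exists N, ET_partial n ell h N >= / 2 * INR n * ln (INR n).
Proof. intros Hn Hs. exists (n * n)%nat.
  destruct (main_ind n ell h Hn Hs (n * n)) as [H1 [H2 H3]].
  pose proof (PhiD_le n h _ Hs H1) as H4. rewrite <- surv_Alive in H4.
  set (s := surv n ell h (n * n)) in *. set (E := ET_partial n ell h (n * n)) in *.
  assert (Hp0 : phi n 0 = INR n * H n) by (unfold phi; now rewrite Nat.sub_0_r).
  assert (Hpos : 0 <= phi n 0) by apply phi_ge0.
  assert (Hle : phi n 0 <= INR (n * n)).
  { rewrite Hp0, mult_INR. apply Rmult_le_compat_l; [apply pos_INR|apply H_le]. }
  assert (Hmain : phi n 0 <= 2 * E).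
  { destruct (Rle_or_lt 0 s) as [Hs0|Hs0].
    - assert (phi n 0 * s <= INR (n * n) * s) by (apply Rmult_le_compat_r; auto). lra.
    - assert (phi n 0 * s <= 0).
      { rewrite <- (Rmult_0_r (phi n 0)). apply Rmult_le_compat_l; lra. }
      lra. }
  assert (Hln : INR n * ln (INR n) <= phi n 0).
  { rewrite Hp0. apply Rmult_le_compat_l; [apply pos_INR|apply H_ln'; lia]. }
  lra.
Qed.

Theorem theorem3 :
  (exists c : R, c > 0 /\ exists n0 : nat, forall n ell : nat,
     (1 <= n)%nat -> (n0 <= n)%nat -> (n <= ell)%nat ->
     exists N : nat, ET_partial n ell AND_n N >= c * INR n * ln (INR n)) /\
  (exists c : R, c > 0 /\ exists n0 : nat, forall n ell : nat,
     (1 <= n)%nat -> (n0 <= n)%nat -> (n <= ell)%nat ->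
     exists N : nat, ET_partial n ell OR_n N >= c * INR n * ln (INR n)).
Proof.
  split; exists (/ 2); (split; [lra|]); exists 1%nat; intros n ell Hn _ _; apply bound; auto.
  - apply sep_AND.
  - apply sep_OR.
Qed.
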